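(* Let $\mathcal M$ be a multi-ideal. Suppose there are a positive integer $n$ and Banach spaces $E_1,\ldots,E_n,F$ with two properties. First, $\mathcal{M}(E_1,\ldots,E_n,F;\mathbb{K})=\mathcal{L}(E_1,\ldots,E_n,F;\mathbb{K})$. Second, $\mathcal{M}(E_1,\ldots,E_n;F')\neq\mathcal{L}(E_1,\ldots,E_n;F')$. Then no smooth tensor norm represents $\mathcal M$.
   Context: All spaces are over a fixed field $\mathbb{K}=\mathbb{R}$ or $\mathbb{C}$. $\mathcal{L}(E_1,\ldots,E_n;F)$ is the space of continuous $n$-linear maps with the sup norm, and $E'$ is the dual of $E$. A tensor norm is a sequence $\beta=(\beta_n)_{n\ge1}$ where each $\beta_n$ assigns to every $n$-tuple of normed spaces a reasonable crossnorm on $E_1\otimes\cdots\otimes E_n$ with the metric mapping property. $\beta$ is smooth if for every $n$ and all normed $E_1,\ldots,E_n$ the map $\psi\colon(E_1\otimes\cdots\otimes E_n\otimes\mathbb{K},\beta_{n+1})\to(E_1\otimes\cdots\otimes E_n,\beta_n)$, $\psi(x_1\otimes\cdots\otimes x_n\otimes\lambda)=\lambda(x_1\otimes\cdots\otimes x_n)$, is an isometric isomorphism. A multi-ideal $\mathcal M$ assigns to all Banach spaces $E_1,\ldots,E_n,F$ a linear subspace $\mathcal M(E_1,\ldots,E_n;F)\subseteq\mathcal{L}(E_1,\ldots,E_n;F)$ that contains the finite-type maps. It is closed under composition with bounded linear operators on both sides. It carries a complete norm $\|\cdot\|_{\mathcal M}$ satisfying $\|(\lambda_1,\ldots,\lambda_n)\mapsto\lambda_1\cdots\lambda_n\|_{\mathcal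 M}=1$ and $\|t\circ A\circ(u_1,\ldots,u_n)\|_{\mathcal M}\le\|t\|\|A\|_{\mathcal M}\prod\|u_j\|$. $\mathcal M$ is represented by $\beta$ if for every $n$ and all Banach spaces $E_1,\ldots,E_n,F$ the canonical map $\varphi\colon\mathcal{M}(E_1,\ldots,E_n;F')\to(E_1\otimes\cdots\otimes E_n\otimes F,\beta_{n+1})'$, $\varphi(T)(x_1\otimes\cdots\otimes x_n\otimes y)=T(x_1,\ldots,x_n)(y)$, is an isometric isomorphism onto. *)

(* Defs.v *)
From Stdlib Require Import Reals Lra Psatz List ClassicalEpsilon.
Import ListNotations.
Open Scope R_scope.

Inductive scalar_field : Type := RealField | ComplexField.

Definition K (k : scalar_field) : Type :=
  match k with RealField => R | ComplexField => prod R R end.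

Definition Kzero (k : scalar_field) : K k :=
  match k return K k with RealField => 0 | ComplexField => (0, 0) end.
Definition Kone (k : scalar_field) : K k :=
  match k return K k with RealField => 1 | ComplexField => (1, 0) end.
Definition Kadd {k : scalar_field} : K k -> K k -> K k :=
  match k return K k -> K k -> K k with
  | RealField => Rplus
  | ComplexField => fun a b => (fst a + fst b, snd a + snd b) end.
Definition Kopp {k : scalar_field} : K k -> K k :=
  match k return K k -> K k with
  | RealField => Ropp
  | ComplexField => fun a => (- fst a, - snd a) end.
Definition Kmul {k : scalar_field} : K k -> K k -> K k :=
  match k return K k -> K k -> K k with
  | RealField => Rmult
  | ComplexField => fun a b =>
      (fst a * fst b - snd a * snd b, fst a * snd b + snd a * fst b) end.
Definition Kabs {k : scalar_field} : K k -> R :=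
  match k return K k -> R with
  | RealField => Rabs
  | ComplexField => fun a => sqrt (fst a * fst a + snd a * snd a) end.

Lemma Kid_add k (a p q r s : K k) :
  Kadd (Kadd (Kmul a p) q) (Kadd (Kmul a r) s) = Kadd (Kmul a (Kadd p r)) (Kadd q s).
Proof.
  destruct k; simpl in *; [ring|].
  destruct a, p, q, r, s; simpl; f_equal; ring.
Qed.

Lemma Kid_zero k (a : K k) : Kzero k = Kadd (Kmul a (Kzero k)) (Kzero k).
Proof. destruct k; simpl in *; [ring|]. destruct a; simpl; f_equal; ring. Qed.

Lemma Kid_opp k (a p q : K k) : Kopp (Kadd (Kmul a p) q) = Kadd (Kmul a (Kopp p)) (Kopp q).
Proof. destruct k; simpl in *; [ring|]. destruct a, p, q; simpl; f_equal; ring. Qed.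

Lemma Kid_scal k (c a p q : K k) :
  Kmul c (Kadd (Kmul a p) q) = Kadd (Kmul a (Kmul c p)) (Kmul c q).
Proof. destruct k; simpl in *; [ring|]. destruct c, a, p, q; simpl; f_equal; ring. Qed.

Lemma Kabs_zero k : Kabs (Kzero k) = 0.
Proof.
  destruct k; simpl; [apply Rabs_R0|].
  replace (0 * 0 + 0 * 0) with 0 by ring. apply sqrt_0.
Qed.

Lemma Kabs_nonneg k (a : K k) : 0 <= Kabs a.
Proof. destruct k; simpl; [apply Rabs_pos | apply sqrt_pos]. Qed.

Lemma Kabs_opp k (a : K k) : Kabs (Kopp a) = Kabs a.
Proof.
  destruct k; simpl in *; [apply Rabs_Ropp|].
  destruct a; simpl; f_equal; ring.
Qed.

Lemma Kabs_mul k (a b : K k) : Kabs (Kmul a b) = Kabs a * Kabs b.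
Proof.
  destruct k; simpl in *; [apply Rabs_mult|].
  destruct a as [a1 a2], b as [b1 b2]; simpl.
  rewrite <- sqrt_mult_alt by nra. f_equal; ring.
Qed.

Lemma Kabs_triangle k (a b : K k) : Kabs (Kadd a b) <= Kabs a + Kabs b.
Proof.
  destruct k; simpl in *; [apply Rabs_triang|].
  destruct a as [a c], b as [b d]; simpl.
  set (p := sqrt (a * a + c * c)). set (q := sqrt (b * b + d * d)).
  assert (Hp : 0 <= p) by apply sqrt_pos. assert (Hq : 0 <= q) by apply sqrt_pos.
  assert (Hp2 : p * p = a * a + c * c) by (apply sqrt_sqrt; nra).
  assert (Hq2 : q * q = b * b + d * d) by (apply sqrt_sqrt; nra).
  assert (Hpq : a * b + c * d <= p * q).
  { assert (H : (p * q) * (p * q) - (a * b + c * d) * (a * b + c * d)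
                = (a * d - c * b) * (a * d - c * b)).
    { replace ((p * q) * (p * q)) with ((p * p) * (q * q)) by ring.
      rewrite Hp2, Hq2. ring. }
    assert (Hpq0 : 0 <= p * q) by (apply Rmult_le_pos; assumption).
    assert (Hsq : 0 <= (a * d - c * b) * (a * d - c * b)) by apply Rle_0_sqr.
    destruct (Rle_or_lt (a * b + c * d) (p * q)) as [Hle|Hlt]; [exact Hle|].
    exfalso.
    assert (Hm : (p * q) * (p * q) < (a * b + c * d) * (a * b + c * d)).
    { apply Rmult_le_0_lt_compat; assumption. }
    lra. }
  rewrite <- (sqrt_square (p + q)) by lra.
  apply sqrt_le_1_alt. nra.
Qed.

Record NSpace (k : scalar_field) : Type := mkNSpace {
  vec :> Type;
  vzero : vec;
  vadd : vec -> vec -> vec;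
  vopp : vec -> vec;
  vscal : K k -> vec -> vec;
  vnorm : vec -> R }.
Arguments mkNSpace {k}.
Arguments vec {k}.
Arguments vzero {k} _.
Arguments vadd {k _}.
Arguments vopp {k _}.
Arguments vscal {k _}.
Arguments vnorm {k _}.

Definition vsub {k} {E : NSpace k} (u v : E) : E := vadd u (vopp v).

Definition is_normed_space {k} (E : NSpace k) : Prop :=
  (forall u v w : E, vadd u (vadd v w) = vadd (vadd u v) w) /\
  (forall u v : E, vadd u v = vadd v u) /\
  (forall u : E, vadd u (vzero E) = u) /\
  (forall u : E, vadd u (vopp u) = vzero E) /\
  (forall (a b : K k) (u : E), vscal a (vscal b u) = vscal (Kmul a b) u) /\
  (forall u : E, vscal (Kone k) u = u) /\
  (forall (a : K k) (u v : E), vscal a (vadd u v) = vadd (vscal a u) (vscal a v)) /\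
  (forall (a b : K k) (u : E), vscal (Kadd a b) u = vadd (vscal a u) (vscal b u)) /\
  (forall u : E, 0 <= vnorm u) /\
  (forall u : E, vnorm u = 0 -> u = vzero E) /\
  (forall (a : K k) (u : E), vnorm (vscal a u) = Kabs a * vnorm u) /\
  (forall u v : E, vnorm (vadd u v) <= vnorm u + vnorm v).

Definition complete {k} (E : NSpace k) : Prop :=
  forall s : nat -> E,
    (forall eps, 0 < eps -> exists N, forall m n, (N <= m)%nat -> (N <= n)%nat ->
        vnorm (vsub (s m) (s n)) < eps) ->
    exists l : E, forall eps, 0 < eps -> exists N, forall n, (N <= n)%nat ->
        vnorm (vsub (s n) l) < eps.

Definition banach {k} (E : NSpace k) : Prop := is_normed_space E /\ complete E.

Definition all_normed {k} (Es : list (NSpace k)) : Prop := Forall is_normed_space Es.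
Definition all_banach {k} (Es : list (NSpace k)) : Prop := Forall banach Es.

(* supremum of a set of reals (meaningful when the set is nonempty and bounded) *)
Definition Rsup (S : R -> Prop) : R := epsilon (inhabits 0) (fun m => is_lub S m).

Definition linear_map {k} {E G : NSpace k} (f : E -> G) : Prop :=
  forall (a : K k) (u v : E), f (vadd (vscal a u) v) = vadd (vscal a (f u)) (f v).

Definition bounded_map {k} {E G : NSpace k} (f : E -> G) : Prop :=
  exists C, forall x : E, vnorm (f x) <= C * vnorm x.

Definition opnorm {k} {E G : NSpace k} (f : E -> G) : R :=
  Rsup (fun r => exists x : E, vnorm x <= 1 /\ r = vnorm (f x)).

Definition Kspace (k : scalar_field) : NSpace k :=
  mkNSpace (K k) (Kzero k) (@Kadd k) (@Kopp k) (@Kmul k) (@Kabs k).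

Definition is_functional {k} {E : NSpace k} (f : E -> K k) : Prop :=
  @linear_map k E (Kspace k) f /\ @bounded_map k E (Kspace k) f.

Definition functional {k} (E : NSpace k) : Type := { f : E -> K k | is_functional f }.

Lemma dzero_ok k (E : NSpace k) : is_functional (fun _ : E => Kzero k).
Proof.
  split.
  - intros a u v; simpl. apply Kid_zero.
  - exists 0; intros x; simpl. rewrite Kabs_zero. lra.
Qed.

Lemma dadd_ok k (E : NSpace k) (f g : functional E) :
  is_functional (fun x : E => Kadd (proj1_sig f x) (proj1_sig g x)).
Proof.
  destruct f as [f [Lf [Cf Bf]]], g as [g [Lg [Cg Bg]]]; simpl. split.
  - intros a u v; simpl in *. rewrite Lf, Lg. apply Kid_add.
  - exists (Cf + Cg); intros x; simpl in *.
    pose proof (Bf x); pose proof (Bg x); pose proof (Kabs_triangle k (f x) (g x)). nra.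
Qed.

Lemma dopp_ok k (E : NSpace k) (f : functional E) :
  is_functional (fun x : E => Kopp (proj1_sig f x)).
Proof.
  destruct f as [f [Lf [Cf Bf]]]; simpl. split.
  - intros a u v; simpl in *. rewrite Lf. apply Kid_opp.
  - exists Cf; intros x; simpl in *. rewrite Kabs_opp. apply Bf.
Qed.

Lemma dscal_ok k (E : NSpace k) (c : K k) (f : functional E) :
  is_functional (fun x : E => Kmul c (proj1_sig f x)).
Proof.
  destruct f as [f [Lf [Cf Bf]]]; simpl. split.
  - intros a u v; simpl in *. rewrite Lf. apply Kid_scal.
  - exists (Kabs c * Cf); intros x; simpl in *. rewrite Kabs_mul.
    pose proof (Bf x). pose proof (Kabs_nonneg k c).
    rewrite Rmult_assoc. apply Rmult_le_compat_l; assumption.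
Qed.

Definition dual {k} (E : NSpace k) : NSpace k :=
  mkNSpace (functional E)
    (exist _ _ (dzero_ok k E))
    (fun f g => exist _ _ (dadd_ok k E f g))
    (fun f => exist _ _ (dopp_ok k E f))
    (fun c f => exist _ _ (dscal_ok k E c f))
    (fun f => Rsup (fun r => exists x : E, vnorm x <= 1 /\ r = Kabs (proj1_sig f x))).

Fixpoint htuple {k} (Es : list (NSpace k)) : Type :=
  match Es with nil => unit | E :: Es' => prod (vec E) (htuple Es') end.

Fixpoint hsplit {k} (Es Gs : list (NSpace k)) : htuple (Es ++ Gs) -> prod (htuple Es) (htuple Gs) :=
  match Es return htuple (Es ++ Gs) -> prod (htuple Es) (htuple Gs) with
  | nil => fun z => (tt, z)
  | E :: Es' => fun z => let p := hsplit Es' Gs (snd z) in ((fst z, fst p), snd p)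
  end.

Fixpoint multilinear {k} (Es : list (NSpace k)) (G : NSpace k) {struct Es} :
    (htuple Es -> G) -> Prop :=
  match Es return (htuple Es -> G) -> Prop with
  | nil => fun _ => True
  | E :: Es' => fun A =>
      (forall t, @linear_map k E G (fun x => A (x, t))) /\
      (forall x : E, multilinear Es' G (fun t => A (x, t)))
  end.

Fixpoint hnorm_prod {k} (Es : list (NSpace k)) : htuple Es -> R :=
  match Es return htuple Es -> R with
  | nil => fun _ => 1
  | E :: Es' => fun z => vnorm (fst z) * hnorm_prod Es' (snd z)
  end.

Fixpoint hball {k} (Es : list (NSpace k)) : htuple Es -> Prop :=
  match Es return htuple Es -> Prop with
  | nil => fun _ => True
  | E :: Es' => fun z => vnorm (fst z) <= 1 /\ hball Es' (snd z)
  end.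

Definition bounded_ml {k} (Es : list (NSpace k)) (G : NSpace k) (A : htuple Es -> G) : Prop :=
  exists C, forall x, vnorm (A x) <= C * hnorm_prod Es x.

Definition cont_multilinear {k} (Es : list (NSpace k)) (G : NSpace k) (A : htuple Es -> G) : Prop :=
  multilinear Es G A /\ bounded_ml Es G A.

Definition mlnorm {k} (Es : list (NSpace k)) (G : NSpace k) (A : htuple Es -> G) : R :=
  Rsup (fun r => exists x, hball Es x /\ r = vnorm (A x)).

Fixpoint hduals {k} (Es : list (NSpace k)) : Type :=
  match Es with nil => unit | E :: Es' => prod (vec (dual E)) (hduals Es') end.

Fixpoint heval {k} (Es : list (NSpace k)) : hduals Es -> htuple Es -> K k :=
  match Es return hduals Es -> htuple Es -> K k with
  | nil => fun _ _ => Kone k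
  | E :: Es' => fun phis z => Kmul (proj1_sig (fst phis) (fst z)) (heval Es' (snd phis) (snd z))
  end.

Fixpoint hdnorm_prod {k} (Es : list (NSpace k)) : hduals Es -> R :=
  match Es return hduals Es -> R with
  | nil => fun _ => 1
  | E :: Es' => fun phis => vnorm (fst phis) * hdnorm_prod Es' (snd phis)
  end.

Fixpoint hmaps {k} (Es0 Es : list (NSpace k)) : Type :=
  match Es0, Es with
  | nil, nil => unit
  | E0 :: Es0', E :: Es' => prod (vec E0 -> vec E) (hmaps Es0' Es')
  | _, _ => Empty_set
  end.

Fixpoint happly {k} (Es0 Es : list (NSpace k)) {struct Es0} :
    hmaps Es0 Es -> htuple Es0 -> htuple Es :=
  match Es0 as l0, Es as l return hmaps l0 l -> htuple l0 -> htuple l with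
  | nil, nil => fun _ _ => tt
  | E0 :: Es0', E :: Es' => fun us z => (fst us (fst z), happly Es0' Es' (snd us) (snd z))
  | nil, _ :: _ => fun us _ => match us return _ with end
  | _ :: _, nil => fun us _ => match us return _ with end
  end.

Fixpoint hmaps_ok {k} (Es0 Es : list (NSpace k)) {struct Es0} : hmaps Es0 Es -> Prop :=
  match Es0 as l0, Es as l return hmaps l0 l -> Prop with
  | nil, nil => fun _ => True
  | E0 :: Es0', E :: Es' => fun us =>
      (linear_map (fst us) /\ bounded_map (fst us)) /\ hmaps_ok Es0' Es' (snd us)
  | nil, _ :: _ => fun _ => False
  | _ :: _, nil => fun _ => False
  end.

Fixpoint hopnorm_prod {k} (Es0 Es : list (NSpace k)) {struct Es0} : hmaps Es0 Es -> R :=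
  match Es0 as l0, Es as l return hmaps l0 l -> R with
  | nil, nil => fun _ => 1
  | E0 :: Es0', E :: Es' => fun us => opnorm (fst us) * hopnorm_prod Es0' Es' (snd us)
  | nil, _ :: _ => fun _ => 0
  | _ :: _, nil => fun _ => 0
  end.

Fixpoint kprod (k : scalar_field) (n : nat) : htuple (repeat (Kspace k) n) -> K k :=
  match n return htuple (repeat (Kspace k) n) -> K k with
  | O => fun _ => Kone k
  | S m => fun z => Kmul (fst z) (kprod k m (snd z))
  end.

Record multi_ideal (k : scalar_field) : Type := MultiIdeal {
  mi_mem : forall (Es : list (NSpace k)) (G : NSpace k), (htuple Es -> G) -> Prop;
  mi_norm : forall (Es : list (NSpace k)) (G : NSpace k), (htuple Es -> G) -> R }.
Arguments mi_mem {k} _ _ _ _.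
Arguments mi_norm {k} _ _ _ _.

Definition is_multi_ideal {k} (M : multi_ideal k) : Prop :=
  (forall (Es : list (NSpace k)) (G : NSpace k),
     Es <> nil -> all_banach Es -> banach G ->
     (forall A, mi_mem M Es G A -> cont_multilinear Es G A) /\
     mi_mem M Es G (fun _ => vzero G) /\
     (forall A B, mi_mem M Es G A -> mi_mem M Es G B ->
        mi_mem M Es G (fun x => vadd (A x) (B x))) /\
     (forall (a : K k) A, mi_mem M Es G A -> mi_mem M Es G (fun x => vscal a (A x))) /\
     (forall (phis : hduals Es) (y : G), mi_mem M Es G (fun x => vscal (heval Es phis x) y)) /\
     (forall A, mi_mem M Es G A -> 0 <= mi_norm M Es G A) /\
     (forall A, mi_mem M Es G A -> mi_norm M Es G A = 0 -> forall x, A x = vzero G) /\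
     (forall (a : K k) A, mi_mem M Es G A ->
        mi_norm M Es G (fun x => vscal a (A x)) = Kabs a * mi_norm M Es G A) /\
     (forall A B, mi_mem M Es G A -> mi_mem M Es G B ->
        mi_norm M Es G (fun x => vadd (A x) (B x)) <= mi_norm M Es G A + mi_norm M Es G B) /\
     (forall s : nat -> (htuple Es -> G),
        (forall n, mi_mem M Es G (s n)) ->
        (forall eps, 0 < eps -> exists N, forall m n, (N <= m)%nat -> (N <= n)%nat ->
            mi_norm M Es G (fun x => vsub (s m x) (s n x)) < eps) ->
        exists A, mi_mem M Es G A /\
          (forall eps, 0 < eps -> exists N, forall n, (N <= n)%nat ->
            mi_norm M Es G (fun x => vsub (s n x) (A x)) < eps))) /\
  (forall (Es0 Es : list (NSpace k)) (G G0 : NSpace k)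
          (us : hmaps Es0 Es) (t : G -> G0) (A : htuple Es -> G),
     Es <> nil -> all_banach Es0 -> all_banach Es -> banach G -> banach G0 ->
     hmaps_ok Es0 Es us -> linear_map t -> bounded_map t ->
     mi_mem M Es G A ->
     mi_mem M Es0 G0 (fun x => t (A (happly Es0 Es us x))) /\
     mi_norm M Es0 G0 (fun x => t (A (happly Es0 Es us x)))
       <= opnorm t * mi_norm M Es G A * hopnorm_prod Es0 Es us) /\
  (forall n : nat, (1 <= n)%nat ->
     mi_norm M (repeat (Kspace k) n) (Kspace k) (kprod k n) = 1).

(* A tensor in E1 (x) ... (x) En is represented by a finite list of      *)
(* elementary tensors; two lists represent the same tensor iff every     *)
(* multilinear form takes the same value on them (universal property).   *)
Definition tsum {k} {Es : list (NSpace k)} (B : htuple Es -> K k) (u : list (htuple Es)) : K k :=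
  fold_right (fun x acc => Kadd (B x) acc) (Kzero k) u.

Definition tensor_eq {k} (Es : list (NSpace k)) (u v : list (htuple Es)) : Prop :=
  forall B : htuple Es -> K k, multilinear Es (Kspace k) B -> tsum B u = tsum B v.

(* beta Es is beta_n on E1 (x) ... (x) En when Es has length n *)
Definition tnorm_family (k : scalar_field) : Type :=
  forall Es : list (NSpace k), list (htuple Es) -> R.

Definition is_tensor_norm {k} (beta : tnorm_family k) : Prop :=
  forall Es : list (NSpace k), Es <> nil -> all_normed Es ->
    (forall u v, tensor_eq Es u v -> beta Es u = beta Es v) /\
    (forall u, 0 <= beta Es u) /\
    (forall u, beta Es u = 0 -> tensor_eq Es u nil) /\
    (forall u v, beta Es (u ++ v) <= beta Es u + beta Es v) /\
    (forall (a : K k) u v,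
       (forall B, multilinear Es (Kspace k) B -> tsum B v = Kmul a (tsum B u)) ->
       beta Es v = Kabs a * beta Es u) /\
    (forall x : htuple Es, beta Es [x] = hnorm_prod Es x) /\
    (forall (phis : hduals Es) u,
       Kabs (tsum (heval Es phis) u) <= hdnorm_prod Es phis * beta Es u) /\
    (forall (Gs : list (NSpace k)) (us : hmaps Es Gs),
       all_normed Gs -> hmaps_ok Es Gs us ->
       forall u, beta Gs (map (happly Es Gs us) u) <= hopnorm_prod Es Gs us * beta Es u).

(* smoothness: psi(x1 (x) ... (x) xn (x) lambda) = lambda (x1 (x) ... (x) xn)
   is isometric: whenever v represents psi(w), beta_n(v) = beta_{n+1}(w) *)
Definition smooth {k} (beta : tnorm_family k) : Prop :=
  forall Es : list (NSpace k), Es <> nil -> all_normed Es ->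
    forall (w : list (htuple (Es ++ [Kspace k]))) (v : list (htuple Es)),
      (forall B : htuple Es -> K k, multilinear Es (Kspace k) B ->
         tsum B v =
         tsum (fun z : htuple (Es ++ [Kspace k]) =>
                 let p := hsplit Es [Kspace k] z in Kmul (fst (snd p)) (B (fst p))) w) ->
      beta Es v = beta (Es ++ [Kspace k]) w.

(* bounded linear functionals on (E1 (x) ... (x) En, beta) = beta-bounded
   multilinear forms, and their dual norm *)
Definition beta_bounded {k} (beta : tnorm_family k) (Es : list (NSpace k))
    (B : htuple Es -> K k) : Prop :=
  exists C, forall u, Kabs (tsum B u) <= C * beta Es u.

Definition beta_dnorm {k} (beta : tnorm_family k) (Es : list (NSpace k))
    (B : htuple Es -> K k) : R :=
  Rsup (fun r => exists u, beta Es u <= 1 /\ r = Kabs (tsum B u)).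

Definition phiT {k} (Es : list (NSpace k)) (F : NSpace k) (T : htuple Es -> dual F)
    : htuple (Es ++ [F]) -> K k :=
  fun z => let p := hsplit Es [F] z in proj1_sig (T (fst p)) (fst (snd p)).

Definition represents {k} (M : multi_ideal k) (beta : tnorm_family k) : Prop :=
  forall (Es : list (NSpace k)) (F : NSpace k),
    Es <> nil -> all_banach Es -> banach F ->
    (forall T : htuple Es -> dual F, mi_mem M Es (dual F) T ->
       beta_bounded beta (Es ++ [F]) (phiT Es F T) /\
       beta_dnorm beta (Es ++ [F]) (phiT Es F T) = mi_norm M Es (dual F) T) /\
    (forall B : htuple (Es ++ [F]) -> K k,
       multilinear (Es ++ [F]) (Kspace k) B -> beta_bounded beta (Es ++ [F]) B ->
       exists T, mi_mem M Es (dual F) T /\ forall z, phiT Es F T z = B z).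

(* Main.v *)
Require Import Defs.
From Stdlib Require Import Reals Lra Psatz List ClassicalEpsilon ProofIrrelevance FunctionalExtensionality.
Import ListNotations.
Open Scope R_scope.

Lemma Kmul_one_l k (a : K k) : Kmul (Kone k) a = a.
Proof. destruct k; simpl in *; [ring|]. destruct a; simpl; f_equal; ring. Qed.
Lemma Kmul_one_r k (a : K k) : Kmul a (Kone k) = a.
Proof. destruct k; simpl in *; [ring|]. destruct a; simpl; f_equal; ring. Qed.
Lemma Kadd_zero_r k (a : K k) : Kadd a (Kzero k) = a.
Proof. destruct k; simpl in *; [ring|]. destruct a; simpl; f_equal; ring. Qed.
Lemma Kmul_zero_r k (a : K k) : Kmul a (Kzero k) = Kzero k.
Proof. destruct k; simpl in *; [ring|]. destruct a; simpl; f_equal; ring. Qed.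
Lemma Kabs_one k : Kabs (Kone k) = 1.
Proof. destruct k; simpl. apply Rabs_R1. replace (1*1+0*0) with 1 by ring. apply sqrt_1. Qed.
Lemma Kabs_eq0 k (a : K k) : Kabs a = 0 -> a = Kzero k.
Proof.
  destruct k; simpl in *.
  - intros H. destruct (Req_dec a 0); auto. exfalso. apply Rabs_no_R0 in H0. auto.
  - destruct a as [x y]; simpl. intros H. apply sqrt_eq_0 in H; [|nra].
    f_equal; nra.
Qed.
Lemma Kadd_x_zero_l k (a : K k) : Kadd (Kzero k) a = a.
Proof. destruct k; simpl in *; [ring|]. destruct a; simpl; f_equal; ring. Qed.

Lemma abs_le_sqrt x y : Rabs x <= sqrt (x * x + y * y).
Proof.
  rewrite <- (sqrt_Rsqr_abs x). apply sqrt_le_1_alt. unfold Rsqr.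
  unfold Rabs; destruct (Rcase_abs x); nra.
Qed.
Lemma sqrt_le_abs x y : sqrt (x * x + y * y) <= Rabs x + Rabs y.
Proof.
  assert (0 <= Rabs x + Rabs y) by (pose proof (Rabs_pos x); pose proof (Rabs_pos y); lra).
  rewrite <- (sqrt_square (Rabs x + Rabs y)) by lra.
  apply sqrt_le_1_alt.
  unfold Rabs; destruct (Rcase_abs x), (Rcase_abs y); nra.
Qed.

Lemma Kspace_normed k : is_normed_space (Kspace k).
Proof.
  unfold is_normed_space; simpl.
  split; [|split; [|split; [|split; [|split; [|split; [|split; [|split]]]]]]];
    try (intros; destruct k; simpl in *;
    try (destruct u); try (destruct v); try (destruct w); try (destruct a); try (destruct b);
    simpl; solve [f_equal; ring | ring]).
  split; [intros; apply Kabs_nonneg|].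
  split; [intros; apply Kabs_eq0; auto|].
  split; [intros; apply Kabs_mul|].
  intros; apply Kabs_triangle.
Qed.

Lemma R_completeK : complete (Kspace RealField).
Proof.
  intros s Hc. simpl in *.
  destruct (R_complete s) as [l Hl].
  { intros eps He. destruct (Hc eps He) as [N HN]. exists N. intros n m Hn Hm.
    unfold Rdist. apply HN; lia. }
  exists l. intros eps He. destruct (Hl eps He) as [N HN]. exists N. intros n Hn.
  apply HN. lia.
Qed.

Lemma C_completeK : complete (Kspace ComplexField).
Proof.
  intros s Hc. simpl in *.
  destruct (R_complete (fun n => fst (s n))) as [l1 Hl1].
  { intros eps He. destruct (Hc eps He) as [N HN]. exists N. intros n m Hn Hm.
    unfold Rdist. specialize (HN n m Hn Hm).
    eapply Rle_lt_trans; [|exact HN]. apply abs_le_sqrt. }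
  destruct (R_complete (fun n => snd (s n))) as [l2 Hl2].
  { intros eps He. destruct (Hc eps He) as [N HN]. exists N. intros n m Hn Hm.
    unfold Rdist. specialize (HN n m Hn Hm).
    eapply Rle_lt_trans; [|exact HN]. rewrite Rplus_comm. apply abs_le_sqrt. }
  exists (l1, l2). intros eps He.
  destruct (Hl1 (eps/2)) as [N1 HN1]; [lra|].
  destruct (Hl2 (eps/2)) as [N2 HN2]; [lra|].
  exists (Nat.max N1 N2). intros n Hn. simpl.
  eapply Rle_lt_trans; [apply sqrt_le_abs|].
  specialize (HN1 n ltac:(lia)). specialize (HN2 n ltac:(lia)).
  unfold Rdist in *. simpl in *. unfold Rminus in *. lra.
Qed.

Lemma Kspace_banach k : banach (Kspace k).
Proof.
  split; [apply Kspace_normed|]. destruct k; [apply R_completeK | apply C_completeK].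
Qed.

Lemma feq k (E : NSpace k) (f g : functional E) :
  (forall x, proj1_sig f x = proj1_sig g x) -> f = g.
Proof.
  destruct f as [f Hf], g as [g Hg]; simpl; intros H.
  assert (f = g) by (apply functional_extensionality; auto). subst.
  f_equal. apply proof_irrelevance.
Qed.

Lemma Rsup_eq (S : R -> Prop) m : is_lub S m -> Rsup S = m.
Proof.
  intros H. unfold Rsup. apply is_lub_u with S; auto.
  apply epsilon_spec. exists m; auto.
Qed.

Lemma K_self_add k (a : K k) : a = Kadd a a -> a = Kzero k.
Proof. destruct k; simpl in *; [lra|]. destruct a; simpl; intros H; inversion H; f_equal; lra. Qed.

Lemma fun_zero k (E : NSpace k) (HE : is_normed_space E) (f : E -> K k) :
  @linear_map k E (Kspace k) f -> f (vzero E) = Kzero k.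
Proof.
  intros L. destruct HE as [_ [_ [H3 [_ [_ [H6 _]]]]]].
  pose proof (L (Kone k) (vzero E) (vzero E)) as H. rewrite H6, H3 in H. simpl in H.
  rewrite Kmul_one_l in H. apply K_self_add; auto.
Qed.

Lemma funK k (f : K k -> K k) :
  @linear_map k (Kspace k) (Kspace k) f -> forall x, f x = Kmul x (f (Kone k)).
Proof.
  intros L x. pose proof (fun_zero k (Kspace k) (Kspace_normed k) f L) as H0. simpl in H0.
  pose proof (L x (Kone k) (Kzero k)) as H. simpl in H.
  rewrite Kmul_one_r, Kadd_zero_r, H0, Kadd_zero_r in H. exact H.
Qed.

Lemma dnormK k (f : dual (Kspace k)) : vnorm f = Kabs (proj1_sig f (Kone k)).
Proof.
  simpl. apply Rsup_eq. destruct f as [f [L B]]; simpl. split.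
  - intros r [x [Hx ->]]. rewrite (funK k f L x), Kabs_mul.
    pose proof (Kabs_nonneg k (f (Kone k))). nra.
  - intros b Hb. apply Hb. exists (Kone k). rewrite Kabs_one. split; [lra|auto].
Qed.

Lemma lin_mul k (l : K k) : is_functional (E := Kspace k) (fun x => Kmul x l).
Proof.
  split.
  - intros a u v. simpl. destruct k; simpl in *; [ring|].
    destruct a, u, v, l; simpl; f_equal; ring.
  - exists (Kabs l). intros x. simpl. rewrite Kabs_mul. lra.
Qed.

Lemma dual_banach k : banach (dual (Kspace k)).
Proof.
  pose proof (Kspace_normed k) as [A1 [A2 [A3 [A4 [A5 [A6 [A7 [A8 _]]]]]]]].
  split.
  - split; [|split; [|split; [|split; [|split; [|split; [|split; [|split]]]]]]];
      try (intros; apply feq; intros; simpl; solve [apply A1|apply A2|apply A3|apply A4|apply A5|apply A6|apply A7|apply A8]).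
    split; [intros; rewrite dnormK; apply Kabs_nonneg|].
    split.
    { intros u Hu. rewrite dnormK in Hu. apply Kabs_eq0 in Hu. apply feq. intros x. simpl.
      destruct u as [u [L B]]; simpl in *. rewrite (funK k u L x), Hu. apply Kmul_zero_r. }
    split; [intros; rewrite !dnormK; simpl; apply Kabs_mul|].
    intros; rewrite !dnormK; simpl; apply Kabs_triangle.
  - intros s Hc.
    destruct (proj2 (Kspace_banach k) (fun n => proj1_sig (s n) (Kone k))) as [l Hl].
    { intros eps He. destruct (Hc eps He) as [N HN]. exists N. intros m n Hm Hn.
      specialize (HN m n Hm Hn). unfold vsub in HN. rewrite dnormK in HN. simpl in HN. exact HN. }
    exists (exist _ _ (lin_mul k l)). intros eps He. destruct (Hl eps He) as [N HN].
    exists N. intros n Hn. specialize (HN n Hn). unfold vsub. rewrite dnormK. simpl.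
    rewrite Kmul_one_l. exact HN.
Qed.

Definition Kofr (k : scalar_field) (r : R) : K k :=
  match k return K k with RealField => r | ComplexField => (r, 0) end.
Lemma Kabs_Kofr k r : Kabs (Kofr k r) = Rabs r.
Proof. destruct k; simpl; auto. rewrite <- sqrt_Rsqr_abs. unfold Rsqr. f_equal; ring. Qed.

Lemma dual_bound k (F : NSpace k) (HF : is_normed_space F) (f : dual F) (y : F) :
  Kabs (proj1_sig f y) <= vnorm f * vnorm y.
Proof.
  destruct f as [f [L [C B]]]. simpl.
  set (S := fun r => exists x : F, vnorm x <= 1 /\ r = Kabs (f x)).
  pose proof HF as [H1 [H2 [H3 [H4 [H5 [H6 [H7 [H8 [H9 [H10 [H11 H12]]]]]]]]]]].
  assert (Hb : bound S).
  { exists (Rabs C). intros r [x [Hx ->]]. pose proof (B x). simpl in *.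
    pose proof (H9 x). pose proof (Rle_abs C). pose proof (Rabs_pos C).
    assert (C * vnorm x <= Rabs C * vnorm x) by (apply Rmult_le_compat_r; lra). nra. }
  assert (Hne : exists r, S r).
  { exists (Kabs (f (vscal (Kzero k) (vzero F)))). exists (vscal (Kzero k) (vzero F)).
    rewrite H11, Kabs_zero. split; [lra|auto]. }
  destruct (completeness S Hb Hne) as [m Hm].
  rewrite (Rsup_eq S m Hm).
  assert (Hm0 : 0 <= m).
  { destruct Hne as [r Hr]. apply Rle_trans with r; [|apply Hm; auto].
    destruct Hr as [x [_ ->]]. apply Kabs_nonneg. }
  destruct (Req_dec (vnorm y) 0) as [Hy|Hy].
  - apply H10 in Hy. subst y. rewrite (fun_zero k F HF f L), Kabs_zero. 
    pose proof (H9 (vzero F)). nra.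
  - pose proof (H9 y) as Hy0.
    set (r := / vnorm y).
    assert (Hr : 0 < r) by (unfold r; apply Rinv_0_lt_compat; lra).
    assert (Hu : vnorm (vscal (Kofr k r) y) = 1).
    { rewrite H11, Kabs_Kofr, Rabs_right by lra. unfold r. field. auto. }
    assert (Hfu : f (vscal (Kofr k r) y) = Kmul (Kofr k r) (f y)).
    { pose proof (L (Kofr k r) y (vzero F)) as E. rewrite H3 in E. rewrite E.
      simpl. rewrite (fun_zero k F HF f L). apply Kadd_zero_r. }
    assert (Kabs (f (vscal (Kofr k r) y)) <= m).
    { apply Hm. eexists; split; [rewrite Hu; lra|reflexivity]. }
    rewrite Hfu, Kabs_mul, Kabs_Kofr, Rabs_right in H by lra.
    unfold r in H.
    apply (Rmult_le_compat_r (vnorm y)) in H; [|lra].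
    rewrite Rmult_comm, <- Rmult_assoc, Rinv_r in H by auto. lra.
Qed.

Fixpoint happend {k} (Es Gs : list (NSpace k)) : htuple Es -> htuple Gs -> htuple (Es ++ Gs) :=
  match Es return htuple Es -> htuple Gs -> htuple (Es ++ Gs) with
  | nil => fun _ y => y
  | E :: Es' => fun x y => (fst x, happend Es' Gs (snd x) y)
  end.

Lemma hsplit_happend k (Es Gs : list (NSpace k)) x y :
  hsplit Es Gs (happend Es Gs x y) = (x, y).
Proof.
  induction Es as [|E Es IH]; simpl.
  - destruct x; auto.
  - destruct x as [x1 x2]; simpl. rewrite IH. auto.
Qed.

Lemma hnorm_app k (Es Gs : list (NSpace k)) z :
  hnorm_prod (Es ++ Gs) z =
  hnorm_prod Es (fst (hsplit Es Gs z)) * hnorm_prod Gs (snd (hsplit Es Gs z)).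
Proof.
  induction Es as [|E Es IH]; simpl.
  - ring.
  - destruct z as [z1 z2]; simpl. rewrite IH. ring.
Qed.

Lemma phiT_ml k (Es : list (NSpace k)) (F : NSpace k) (S : htuple Es -> dual F) :
  multilinear Es (dual F) S -> multilinear (Es ++ [F]) (Kspace k) (phiT Es F S).
Proof.
  revert S; induction Es as [|E Es IH]; intros S HS; simpl.
  - split; auto. intros t. unfold phiT; simpl.
    exact (proj1 (proj2_sig (S tt))).
  - split.
    + intros t a u v. unfold phiT; simpl.
      pose proof (proj1 HS (fst (hsplit Es [F] t)) a u v) as Hl. cbv beta in Hl.
      exact (f_equal (fun g : functional F => proj1_sig g (fst (snd (hsplit Es [F] t)))) Hl).
    + intros x. exact (IH (fun t => S (x, t)) (proj2 HS x)).
Qed.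

Lemma phiT_bd k (Es : list (NSpace k)) (F : NSpace k) (S : htuple Es -> dual F) :
  is_normed_space F -> bounded_ml Es (dual F) S -> bounded_ml (Es ++ [F]) (Kspace k) (phiT Es F S).
Proof.
  intros HF [C HC]. exists C. intros z. rewrite hnorm_app. unfold phiT. simpl.
  destruct (hsplit Es [F] z) as [x [y u]]. simpl.
  pose proof (dual_bound k F HF (S x) y) as H. pose proof (HC x).
  pose proof HF as [_ [_ [_ [_ [_ [_ [_ [_ [H9 _]]]]]]]]]. specialize (H9 y).
  eapply Rle_trans; [exact H|]. rewrite Rmult_1_r, <- Rmult_assoc.
  apply Rmult_le_compat_r; auto.
Qed.

Fixpoint idmaps {k} (Es : list (NSpace k)) : hmaps Es Es :=
  match Es return hmaps Es Es with
  | nil => tt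
  | E :: Es' => (fun x => x, idmaps Es')
  end.

Lemma happly_id k (Es : list (NSpace k)) z : happly Es Es (idmaps Es) z = z.
Proof.
  induction Es as [|E Es IH]; simpl; destruct z; auto. rewrite IH; auto.
Qed.

Lemma hmaps_ok_id k (Es : list (NSpace k)) : all_normed Es -> hmaps_ok Es Es (idmaps Es).
Proof.
  induction Es as [|E Es IH]; simpl; auto. intros H. inversion H; subst.
  split; [split|auto].
  - intros a u v; auto.
  - exists 1. intros x. lra.
Qed.

Ltac kring k := destruct k; simpl in *; [ring|];
  repeat match goal with p : (R * R)%type |- _ => destruct p end; simpl; f_equal; ring.

Lemma Ksub_eq_tri k (a b c : K k) :
  Kadd a (Kopp c) = Kadd (Kadd a (Kopp b)) (Kadd b (Kopp c)).
Proof. kring k. Qed.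
Lemma Ksub_tri k (a b c : K k) :
  Kabs (Kadd a (Kopp c)) <= Kabs (Kadd a (Kopp b)) + Kabs (Kadd b (Kopp c)).
Proof. rewrite (Ksub_eq_tri k a b c). apply Kabs_triangle. Qed.
Lemma Ksub_sym k (a b : K k) : Kabs (Kadd a (Kopp b)) = Kabs (Kadd b (Kopp a)).
Proof. rewrite <- Kabs_opp. f_equal. kring k. Qed.
Lemma Kabs_sub_le k (a b : K k) : Kabs a <= Kabs b + Kabs (Kadd a (Kopp b)).
Proof.
  replace a with (Kadd b (Kadd a (Kopp b))) at 1 by kring k. apply Kabs_triangle.
Qed.

Lemma le_eps a b : (forall d, 0 < d -> a <= b + d) -> a <= b.
Proof.
  intros H. destruct (Rle_or_lt a b); auto. specialize (H ((a - b)/2)). lra.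
Qed.

Section DualF.
Variable k : scalar_field.
Variable F : NSpace k.
Hypothesis HF : is_normed_space F.

Definition dset (f : dual F) := fun r => exists x : F, vnorm x <= 1 /\ r = Kabs (proj1_sig f x).

Lemma dnorm_lub (f : dual F) : is_lub (dset f) (vnorm f).
Proof.
  destruct f as [f [L [C B]]]. simpl.
  set (S := fun r => exists x : F, vnorm x <= 1 /\ r = Kabs (f x)).
  pose proof HF as [H1 [H2 [H3 [H4 [H5 [H6 [H7 [H8 [H9 [H10 [H11 H12]]]]]]]]]]].
  assert (Hb : bound S).
  { exists (Rabs C). intros r [x [Hx ->]]. pose proof (B x). simpl in *.
    pose proof (H9 x). pose proof (Rle_abs C). pose proof (Rabs_pos C).
    assert (C * vnorm x <= Rabs C * vnorm x) by (apply Rmult_le_compat_r; lra). nra. }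
  assert (Hne : exists r, S r).
  { exists (Kabs (f (vscal (Kzero k) (vzero F)))). exists (vscal (Kzero k) (vzero F)).
    rewrite H11, Kabs_zero. split; [lra|auto]. }
  destruct (completeness S Hb Hne) as [m Hm].
  rewrite (Rsup_eq S m Hm). exact Hm.
Qed.

Lemma dnorm_le (f : dual F) c : (forall x, vnorm x <= 1 -> Kabs (proj1_sig f x) <= c) -> vnorm f <= c.
Proof. intros H. apply (proj2 (dnorm_lub f)). intros r [x [Hx ->]]. auto. Qed.

Lemma dnorm_ge (f : dual F) x : vnorm x <= 1 -> Kabs (proj1_sig f x) <= vnorm f.
Proof. intros H. apply (proj1 (dnorm_lub f)). exists x; auto. Qed.

Lemma vnorm_zero_le : vnorm (vscal (Kzero k) (vzero F)) <= 1.
Proof.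
  pose proof HF as [_ [_ [_ [_ [_ [_ [_ [_ [_ [_ [H11 _]]]]]]]]]]].
  rewrite H11, Kabs_zero. lra.
Qed.

Lemma dnorm_nonneg (f : dual F) : 0 <= vnorm f.
Proof.
  eapply Rle_trans; [apply Kabs_nonneg|]. apply (dnorm_ge f _ vnorm_zero_le).
Qed.

Lemma dual_normed : is_normed_space (dual F).
Proof.
  pose proof (Kspace_normed k) as [A1 [A2 [A3 [A4 [A5 [A6 [A7 [A8 _]]]]]]]].
  pose proof HF as [_ [_ [_ [_ [_ [_ [_ [_ [H9 [H10 [H11 H12]]]]]]]]]]].
  split; [|split; [|split; [|split; [|split; [|split; [|split; [|split]]]]]]];
    try (intros; apply feq; intros; simpl; solve [apply A1|apply A2|apply A3|apply A4|apply A5|apply A6|apply A7|apply A8]).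
  split; [intros; apply dnorm_nonneg|].
  split.
  { intros u Hu. apply feq. intros x. simpl.
    pose proof (dual_bound k F HF u x) as H. rewrite Hu, Rmult_0_l in H.
    apply Kabs_eq0. pose proof (Kabs_nonneg k (proj1_sig u x)). lra. }
  split.
  { intros a u. apply Rle_antisym.
    - apply dnorm_le. intros x Hx. simpl. rewrite Kabs_mul.
      apply Rmult_le_compat_l; [apply Kabs_nonneg|]. apply dnorm_ge; auto.
    - destruct (Req_dec (Kabs a) 0) as [Ha|Ha].
      + rewrite Ha, Rmult_0_l. apply dnorm_nonneg.
      + pose proof (Kabs_nonneg k a).
        assert (vnorm u <= vnorm (vscal a u) / Kabs a).
        { apply dnorm_le. intros x Hx.
          pose proof (dnorm_ge (vscal a u) x Hx) as G. simpl in G. rewrite Kabs_mul in G.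
          apply (Rmult_le_reg_l (Kabs a)); [lra|]. unfold Rdiv.
          eapply Rle_trans; [exact G|]. right. simpl. field. auto. }
        apply (Rmult_le_compat_l (Kabs a)) in H0; [|lra]. unfold Rdiv in H0.
        rewrite (Rmult_comm (vnorm _)), <- Rmult_assoc, Rinv_r, Rmult_1_l in H0; auto. }
  intros u v. apply dnorm_le. intros x Hx. change (Kabs (Kadd (proj1_sig u x) (proj1_sig v x)) <= vnorm u + vnorm v).
  eapply Rle_trans; [apply Kabs_triangle|].
  pose proof (dnorm_ge u x Hx). pose proof (dnorm_ge v x Hx). lra.
Qed.
End DualF.

Lemma Klin_est k (a x y z p q r : K k) : p = Kadd (Kmul a q) r ->
  Kabs (Kadd x (Kopp (Kadd (Kmul a y) z))) <=
  Kabs (Kadd x (Kopp p)) + Kabs a * Kabs (Kadd y (Kopp q)) + Kabs (Kadd z (Kopp r)).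
Proof.
  intros ->.
  replace (Kadd x (Kopp (Kadd (Kmul a y) z))) with
    (Kadd (Kadd (Kadd x (Kopp (Kadd (Kmul a q) r))) (Kopp (Kmul a (Kadd y (Kopp q)))))
          (Kopp (Kadd z (Kopp r)))) by kring k.
  eapply Rle_trans; [apply Kabs_triangle|]. rewrite Kabs_opp.
  apply Rplus_le_compat_r. eapply Rle_trans; [apply Kabs_triangle|].
  rewrite Kabs_opp, Kabs_mul. lra.
Qed.

Lemma Ksub0 k (a b : K k) : Kadd a (Kopp b) = Kzero k -> a = b.
Proof.
  intros H. replace a with (Kadd (Kadd a (Kopp b)) b) by kring k. rewrite H. apply Kadd_x_zero_l.
Qed.

Lemma dual_complete k (F : NSpace k) (HF : is_normed_space F) : complete (dual F).
Proof.
  pose proof HF as [H1 [H2 [H3 [H4 [H5 [H6 [H7 [H8 [H9 [H10 [H11 H12]]]]]]]]]]].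
  intros s Hc.
  set (P := fun y l => forall eps, 0 < eps -> exists N, forall n, (N <= n)%nat ->
                Kabs (Kadd (proj1_sig (s n) y) (Kopp l)) < eps).
  assert (Hex : forall y, exists l, P y l).
  { intros y. destruct (proj2 (Kspace_banach k) (fun n => proj1_sig (s n) y)) as [l Hl].
    - intros eps He. pose proof (H9 y). set (ny := vnorm y) in *.
      destruct (Hc (eps / (ny + 1))) as [N HN].
      { apply Rdiv_lt_0_compat; lra. }
      exists N. intros m n Hm Hn. specialize (HN m n Hm Hn).
      pose proof (dual_bound k F HF (vsub (s m) (s n)) y) as B.
      change (Kabs (Kadd (proj1_sig (s m) y) (Kopp (proj1_sig (s n) y))) < eps).
      change (Kabs (Kadd (proj1_sig (s m) y) (Kopp (proj1_sig (s n) y))) <= vnorm (vsub (s m) (s n)) * ny) in B.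
      pose proof (dnorm_nonneg k F HF (vsub (s m) (s n))).
      assert (vnorm (vsub (s m) (s n)) * ny <= eps / (ny + 1) * ny) by (apply Rmult_le_compat_r; lra).
      assert (eps / (ny + 1) * ny < eps).
      { unfold Rdiv. apply (Rmult_lt_reg_r (ny + 1)); [lra|].
        replace (eps * / (ny + 1) * ny * (ny + 1)) with (eps * ny) by (field; lra). nra. }
      lra.
    - exists l. exact Hl. }
  set (g := fun y => epsilon (inhabits (Kzero k)) (P y)).
  assert (Hg : forall y, P y (g y)) by (intros y; apply epsilon_spec; auto).
  assert (Hu : forall eps, 0 < eps -> exists N, forall n, (N <= n)%nat -> forall w,
             Kabs (Kadd (proj1_sig (s n) w) (Kopp (g w))) <= eps * vnorm w).
  { intros eps He. destruct (Hc eps He) as [N HN]. exists N. intros n Hn w.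
    apply le_eps. intros d Hd. destruct (Hg w d Hd) as [N2 HN2].
    set (m := Nat.max N N2).
    eapply Rle_trans; [apply (Ksub_tri k _ (proj1_sig (s m) w))|].
    pose proof (HN2 m ltac:(unfold m; lia)).
    pose proof (HN n m Hn ltac:(unfold m; lia)).
    pose proof (dual_bound k F HF (vsub (s n) (s m)) w) as B.
    change (Kabs (Kadd (proj1_sig (s n) w) (Kopp (proj1_sig (s m) w))) <= vnorm (vsub (s n) (s m)) * vnorm w) in B.
    pose proof (H9 w).
    assert (vnorm (vsub (s n) (s m)) * vnorm w <= eps * vnorm w) by (apply Rmult_le_compat_r; lra).
    lra. }
  assert (Hgf : is_functional (E := F) g).
  { split.
    - intros a u v. simpl. apply Ksub0. apply Kabs_eq0.
      apply Rle_antisym; [|apply Kabs_nonneg].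
      set (Cst := vnorm (vadd (vscal a u) v) + Kabs a * vnorm u + vnorm v).
      assert (0 <= Cst).
      { pose proof (H9 (vadd (vscal a u) v)). pose proof (H9 u). pose proof (H9 v).
        pose proof (Kabs_nonneg k a). unfold Cst. nra. }
      apply le_eps. intros d Hd. rewrite Rplus_0_l.
      destruct (Hu (d / (Cst + 1))) as [N HN]; [apply Rdiv_lt_0_compat; lra|].
      destruct (proj2_sig (s N)) as [LN _].
      eapply Rle_trans; [exact (Klin_est k a (g (vadd (vscal a u) v)) (g u) (g v) (proj1_sig (s N) (vadd (vscal a u) v)) (proj1_sig (s N) u) (proj1_sig (s N) v) (LN a u v))|].
      rewrite !(Ksub_sym k (g _)).
      pose proof (HN N (le_n _) (vadd (vscal a u) v)).
      pose proof (HN N (le_n _) u). pose proof (HN N (le_n _) v).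
      pose proof (Kabs_nonneg k a).
      assert (Kabs a * Kabs (Kadd (proj1_sig (s N) u) (Kopp (g u))) <= Kabs a * (d / (Cst + 1) * vnorm u))
        by (apply Rmult_le_compat_l; auto).
      assert (d / (Cst + 1) * Cst <= d).
      { unfold Rdiv. apply (Rmult_le_reg_r (Cst + 1)); [lra|].
        replace (d * / (Cst + 1) * Cst * (Cst + 1)) with (d * Cst) by (field; lra). nra. }
      unfold Cst in *. nra.
    - destruct (Hu 1 Rlt_0_1) as [N HN]. exists (vnorm (s N) + 1). intros w. change (Kabs (g w) <= (vnorm (s N) + 1) * vnorm w).
      eapply Rle_trans; [apply (Kabs_sub_le k _ (proj1_sig (s N) w))|].
      rewrite Ksub_sym. pose proof (HN N (le_n _) w).
      pose proof (dual_bound k F HF (s N) w). lra. }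
  exists (exist _ g Hgf). intros eps He.
  destruct (Hu (eps / 2)) as [N HN]; [lra|]. exists N. intros n Hn.
  apply Rle_lt_trans with (eps / 2); [|lra].
  apply (dnorm_le k F HF). intros x Hx.
  change (Kabs (Kadd (proj1_sig (s n) x) (Kopp (g x))) <= eps / 2).
  pose proof (HN n Hn x). pose proof (H9 x).
  assert (eps / 2 * vnorm x <= eps / 2 * 1) by (apply Rmult_le_compat_l; lra). lra.
Qed.

Lemma dual_banach_gen k (F : NSpace k) : is_normed_space F -> banach (dual F).
Proof. intros HF. split; [apply dual_normed; auto | apply dual_complete; auto]. Qed.

Theorem proposition2p8 (k : scalar_field) (M : multi_ideal k) (HM : is_multi_ideal M)
  (Es : list (NSpace k)) (F : NSpace k)
  (Hn : Es <> nil) (HEs : all_banach Es) (HF : banach F)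
  (H1 : forall A : htuple (Es ++ [F]) -> Kspace k,
          mi_mem M (Es ++ [F]) (Kspace k) A <-> cont_multilinear (Es ++ [F]) (Kspace k) A)
  (H2 : ~ (forall T : htuple Es -> dual F,
             mi_mem M Es (dual F) T <-> cont_multilinear Es (dual F) T)) :
  ~ (exists beta : tnorm_family k, is_tensor_norm beta /\ smooth beta /\ represents M beta).
Proof.
  intros [beta [Htn [Hsm Hrep]]].
  destruct HM as [Hsub [Hideal _]].
  assert (HFn : is_normed_space F) by apply HF.
  assert (HdF : banach (dual F)) by (apply dual_banach_gen; auto).
  assert (HL : all_banach (Es ++ [F])) by (apply Forall_app; split; auto).
  assert (HLn : Es ++ [F] <> nil) by (destruct Es; simpl; congruence).
  assert (HLnorm : all_normed (Es ++ [F])).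
  { eapply Forall_impl; [|exact HL]. intros E HE; apply HE. }
  apply H2. intros T. split.
  - intros Hm. exact (proj1 (Hsub Es (dual F) Hn HEs HdF) T Hm).
  - intros [Tml Tbd].
    set (A := phiT Es F T).
    assert (HAml : multilinear (Es ++ [F]) (Kspace k) A) by (apply phiT_ml; auto).
    assert (HA : mi_mem M (Es ++ [F]) (Kspace k) A).
    { apply H1; split; [auto | apply phiT_bd; auto]. }
    set (t := fun c : K k => (exist _ (fun x : K k => Kmul x c) (lin_mul k c) : dual (Kspace k))).
    assert (Ht_lin : linear_map (E:=Kspace k) (G:= dual (Kspace k)) t).
    { intros a u v. apply feq. intros x. simpl. kring k. }
    assert (Ht_bd : bounded_map (E:=Kspace k) (G:= dual (Kspace k)) t).
    { exists 1. intros x. rewrite dnormK. simpl. rewrite Kmul_one_l. lra. }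
    destruct (Hideal (Es ++ [F]) (Es ++ [F]) (Kspace k) (dual (Kspace k)) (idmaps (Es ++ [F])) t A
                HLn HL HL (Kspace_banach k) (dual_banach k) (hmaps_ok_id k _ HLnorm) Ht_lin Ht_bd HA)
      as [HT2 _].
    set (T2 := fun x => t (A (happly (Es ++ [F]) (Es ++ [F]) (idmaps (Es ++ [F])) x))) in HT2.
    destruct (Hrep (Es ++ [F]) (Kspace k) HLn HL (Kspace_banach k)) as [Hiso _].
    destruct (Hiso T2 HT2) as [[C HC] _].
    assert (Hbb : beta_bounded beta (Es ++ [F]) A).
    { exists C. intros u.
      assert (Hb : beta (Es ++ [F]) u =
                   beta ((Es ++ [F]) ++ [Kspace k])
                     (map (fun z => happend (Es ++ [F]) [Kspace k] z (Kone k, tt)) u)).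
      { apply Hsm; auto. intros B _. induction u as [|z u IHu]; simpl; auto.
        rewrite hsplit_happend; simpl. rewrite Kmul_one_l, IHu. reflexivity. }
      assert (Ht : tsum (phiT (Es ++ [F]) (Kspace k) T2)
                     (map (fun z => happend (Es ++ [F]) [Kspace k] z (Kone k, tt)) u) = tsum A u).
      { clear Hb. induction u as [|z u IHu]; simpl; auto. rewrite IHu. f_equal.
        unfold phiT. rewrite hsplit_happend. simpl. unfold T2. rewrite happly_id.
        simpl. apply Kmul_one_l. }
      rewrite Hb, <- Ht. apply HC. }
    destruct (Hrep Es F Hn HEs HF) as [_ Honto].
    destruct (Honto A HAml Hbb) as [T' [HT' Heq]].
    replace T with T'; auto.
    apply functional_extensionality. intros x. apply feq. intros y.
    specialize (Heq (happend Es [F] x (y, tt))). unfold A, phiT in Heq.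
    rewrite hsplit_happend in Heq. simpl in Heq. exact Heq.
Qed.
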